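(* Let $m\ge1$, $p\ge0$ be integers and $\alpha$ a positive common divisor of $m$ and $p$. Then $\Lambda^{(\alpha)}(m,p)$ is a finite set and its cardinality is divisible by $m/\alpha$.
   Context: $\Lambda(m,p)=\{(\lambda_i)_{i\in\mathbb Z}: \lambda_i\in\mathbb Z,\ \lambda_1=0,\ \lambda_i\le\lambda_{i+1},\ \lambda_{i+m}=\lambda_i+p \text{ for all } i\}$. For a positive common divisor $\alpha$ of $m$ and $p$ (every positive integer divides $0$), $\Lambda^{(\alpha)}(m,p)=\{\lambda\in\Lambda(m/\alpha,p/\alpha): \lambda\notin\Lambda(m/\alpha',p/\alpha') \text{ for every common divisor } \alpha'>\alpha \text{ of } m,p\}$. *)

(* Defs.v *)
From Stdlib Require Import ZArith List.
Open Scope Z_scope.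

Definition Lam (m p : Z) (l : Z -> Z) : Prop :=
  l 1 = 0 /\
  (forall i : Z, l i <= l (i + 1)) /\
  (forall i : Z, l (i + m) = l i + p).

Definition LamAlpha (m p alpha : Z) (l : Z -> Z) : Prop :=
  Lam (m / alpha) (p / alpha) l /\
  (forall alpha' : Z, (alpha' | m) -> (alpha' | p) -> alpha < alpha' ->
     ~ Lam (m / alpha') (p / alpha') l).

(* Main.v *)
Require Import Defs.
From Stdlib Require Import ZArith List.
From Stdlib Require Import ClassicalEpsilon FunctionalExtensionality Lia.
Open Scope Z_scope.

Lemma filter_len_split {T} (f : T -> bool) (l : list T) :
  length l = (length (filter f l) + length (filter (fun x => negb (f x)) l))%nat.
Proof. induction l as [|a l IH]; simpl; auto. destruct (f a); simpl; lia. Qed.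

Lemma iter_in {T} (s : T -> T) (L : list T) :
  (forall x, In x L -> In (s x) L) -> forall k x, In x L -> In (Nat.iter k s x) L.
Proof. intros H k; induction k; simpl; auto. Qed.

Lemma orbit_count {T} (dec : forall x y : T, {x = y} + {x <> y}) (s : T -> T) (N : nat)
  (HN : (0 < N)%nat) : forall L, NoDup L -> (forall x, In x L -> In (s x) L) ->
  (forall x, In x L -> Nat.iter N s x = x) ->
  (forall x d, In x L -> (0 < d < N)%nat -> Nat.iter d s x <> x) ->
  Nat.divide N (length L).
Proof.
  intros L. remember (length L) as len eqn:Hlen.
  revert L Hlen. induction len as [len IH] using lt_wf_ind.
  intros L Hlen Hnd Hcl Hper Hfree.
  destruct L as [|x L0]. { subst; simpl. exists 0%nat; lia. }
  assert (Hx : In x (x :: L0)) by (left; auto).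
  set (L := x :: L0) in *.
  set (O := map (fun k => Nat.iter k s x) (seq 0 N)).
  assert (Hinj : forall a b, (a < N)%nat -> (b < N)%nat -> Nat.iter a s x = Nat.iter b s x -> a = b).
  { assert (forall a b, (a < b)%nat -> (b < N)%nat -> Nat.iter a s x <> Nat.iter b s x).
    { intros a b Hab HbN E.
      apply (Hfree x (N - b + a)%nat Hx ltac:(lia)).
      rewrite Nat.iter_add, E, <- Nat.iter_add.
      replace (N - b + b)%nat with N by lia. apply Hper; auto. }
    intros a b Ha Hb E. destruct (Nat.lt_total a b) as [h|[h|h]]; auto.
    - exfalso; eapply H; eauto.
    - exfalso; eapply H; eauto. }
  assert (HOnd : NoDup O).
  { apply NoDup_map_NoDup_ForallPairs; [|apply seq_NoDup].
    intros a b Ha Hb E. apply in_seq in Ha; apply in_seq in Hb. apply Hinj; auto; lia. }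
  assert (HOL : incl O L).
  { intros y Hy. apply in_map_iff in Hy. destruct Hy as [k [<- _]]. apply iter_in; auto. }
  set (inO := fun y => if in_dec dec y O then true else false).
  set (L' := filter (fun y => negb (inO y)) L).
  assert (HlenO : length (filter inO L) = N).
  { assert (incl (filter inO L) O).
    { intros y Hy. apply filter_In in Hy. destruct Hy as [_ Hy]. unfold inO in Hy.
      destruct (in_dec dec y O); auto; discriminate. }
    assert (incl O (filter inO L)).
    { intros y Hy. apply filter_In. split; auto. unfold inO. destruct (in_dec dec y O); auto. }
    pose proof (NoDup_incl_length (NoDup_filter inO Hnd) H).
    pose proof (NoDup_incl_length HOnd H0).
    unfold O in *. rewrite length_map, length_seq in *. lia. }
  pose proof (filter_len_split inO L) as Hsplit.
  fold L' in Hsplit.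
  assert (Hdiv : Nat.divide N (length L')).
  { apply (IH (length L')) with (L := L'); auto; try lia.
    - apply NoDup_filter; auto.
    - intros y Hy. unfold L' in *. apply filter_In in Hy. destruct Hy as [HyL Hy].
      apply filter_In. split; auto.
      unfold inO in *. destruct (in_dec dec y O) as [|Hn]; [discriminate|].
      destruct (in_dec dec (s y) O) as [Hi|]; auto. exfalso; apply Hn.
      apply in_map_iff in Hi. destruct Hi as [k [Ek Hk]]. apply in_seq in Hk.
      assert (Ey : y = Nat.iter (N - 1) s (s y)).
      { rewrite <- Nat.iter_succ_r. replace (S (N - 1)) with N by lia. symmetry; auto. }
      rewrite Ey, <- Ek, <- Nat.iter_add.
      destruct k as [|k].
      + simpl. rewrite Nat.add_0_r. apply in_map_iff. exists (N-1)%nat. split; auto.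
        apply in_seq; lia.
      + replace (N - 1 + S k)%nat with (k + N)%nat by lia.
        rewrite Nat.iter_add, Hper; auto. apply in_map_iff. exists k; split; auto. apply in_seq; lia.
    - intros y Hy. apply filter_In in Hy. apply Hper; tauto.
    - intros y d Hy. apply filter_In in Hy. apply Hfree; tauto. }
  rewrite Hlen, Hsplit, HlenO. apply Nat.divide_add_r; auto. apply Nat.divide_refl.
Qed.
Lemma per_nat (l : Z -> Z) T C : (forall i, l (i + T) = l i + C) ->
  forall (k : nat) x, l (x + T * Z.of_nat k) = l x + C * Z.of_nat k.
Proof.
  intros H k; induction k; intros x.
  - rewrite !Z.mul_0_r, Z.add_0_r; lia.
  - rewrite Nat2Z.inj_succ. replace (x + T * Z.succ (Z.of_nat k)) with ((x + T * Z.of_nat k) + T) by lia.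
    rewrite H, IHk. lia.
Qed.

Lemma per_Z (l : Z -> Z) T C : (forall i, l (i + T) = l i + C) ->
  forall t x, l (x + T * t) = l x + C * t.
Proof.
  intros H t x. destruct (Z.le_gt_cases 0 t).
  - rewrite <- (Z2Nat.id t) by lia. apply per_nat; auto.
  - pose proof (per_nat l T C H (Z.to_nat (-t)) (x + T * t)).
    rewrite Z2Nat.id in H1 by lia.
    replace (x + T * t + T * - t) with x in H1 by lia. lia.
Qed.

Lemma mono (l : Z -> Z) : (forall i, l i <= l (i + 1)) -> forall a b, a <= b -> l a <= l b.
Proof.
  intros H a b Hab. replace b with (a + Z.of_nat (Z.to_nat (b - a))) by lia.
  generalize (Z.to_nat (b - a)). intros k; induction k.
  - rewrite Z.add_0_r; lia.
  - rewrite Nat2Z.inj_succ. replace (a + Z.succ (Z.of_nat k)) with (a + Z.of_nat k + 1) by lia.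
    specialize (H (a + Z.of_nat k)). lia.
Qed.

Definition sig (l : Z -> Z) : Z -> Z := fun i => l (i + 1) - l 2.

Lemma iter_sig (l : Z -> Z) k : l 1 = 0 -> Nat.iter k sig l = fun i => l (i + Z.of_nat k) - l (1 + Z.of_nat k).
Proof.
  intros H1; induction k.
  - simpl. apply functional_extensionality; intros i. rewrite !Z.add_0_r. lia.
  - change (Nat.iter (S k) sig l) with (sig (Nat.iter k sig l)).
    rewrite IHk. unfold sig. apply functional_extensionality; intros i.
    rewrite Nat2Z.inj_succ.
    replace (i + 1 + Z.of_nat k) with (i + Z.succ (Z.of_nat k)) by lia.
    replace (2 + Z.of_nat k) with (1 + Z.succ (Z.of_nat k)) by lia. lia.
Qed.
Lemma Lam_sig n q l : Lam n q l -> Lam n q (sig l).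
Proof.
  intros [H1 [H2 H3]]; unfold sig; split; [|split].
  - replace (1+1) with 2 by lia; lia.
  - intros i. specialize (H2 (i+1)). lia.
  - intros i. replace (i + n + 1) with (i + 1 + n) by lia. rewrite H3. lia.
Qed.

Lemma Lam_iter n q l k : Lam n q l -> Lam n q (Nat.iter k sig l).
Proof. intros H; induction k; simpl; auto. apply Lam_sig; auto. Qed.

Lemma iterN n q l N : Z.of_nat N = n -> Lam n q l -> Nat.iter N sig l = l.
Proof.
  intros HN [H1 [H2 H3]]. rewrite iter_sig by auto. apply functional_extensionality; intros i.
  cbv beta. rewrite HN, H3, H3. lia.
Qed.

Definition Rq (q : Z) := map Z.of_nat (seq 0 (S (Z.to_nat q))).
Fixpoint tup (R : list Z) (k : nat) : list (list Z) :=
  match k with 0%nat => nil :: nil | S k => flat_map (fun x => map (cons x) (tup R k)) R end.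

Lemma tup_in R : forall v, (forall x, In x v -> In x R) -> In v (tup R (length v)).
Proof.
  induction v as [|a v IH]; intros H; simpl; auto.
  apply in_flat_map. exists a. split; [apply H; left; auto|].
  apply in_map. apply IH. intros; apply H; right; auto.
Qed.

Definition F (n q : Z) (v : list Z) (i : Z) : Z := nth (Z.to_nat ((i-1) mod n)) v 0 + q*((i-1)/n).

Lemma enum n q l : 1 <= n -> 0 <= q -> Lam n q l -> In l (map (F n q) (tup (Rq q) (Z.to_nat n))).
Proof.
  intros Hn Hq HL. pose proof HL as [H1 [H2 H3]].
  set (v := map (fun k => l (Z.of_nat k + 1)) (seq 0 (Z.to_nat n))).
  assert (Hlen : length v = Z.to_nat n) by (unfold v; rewrite length_map, length_seq; auto).
  apply in_map_iff. exists v. split.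
  - apply functional_extensionality; intros i. unfold F.
    pose proof (Z.mod_pos_bound (i-1) n ltac:(lia)).
    unfold v. rewrite nth_indep with (d' := (fun k => l (Z.of_nat k + 1)) 0%nat) by (rewrite length_map, length_seq; lia).
    rewrite (map_nth (fun k : nat => l (Z.of_nat k + 1))), seq_nth by lia. simpl. rewrite Z2Nat.id by lia.
    rewrite <- (per_Z l n q H3).
    f_equal. pose proof (Z.div_mod (i-1) n ltac:(lia)). lia.
  - rewrite <- Hlen. apply tup_in. intros x Hx. unfold v in Hx.
    apply in_map_iff in Hx. destruct Hx as [k [<- Hk]]. apply in_seq in Hk.
    unfold Rq. apply in_map_iff. exists (Z.to_nat (l (Z.of_nat k + 1))).
    assert (0 <= l (Z.of_nat k + 1)) by (rewrite <- H1; apply mono; auto; lia).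
    assert (l (Z.of_nat k + 1) <= q).
    { replace q with (l (1 + n)) by (rewrite H3; lia). apply mono; auto; lia. }
    split; [lia|]. apply in_seq. lia.
Qed.
Lemma free m p alpha n q l d : m = n*alpha -> p = q*alpha -> 0 < alpha -> 1 <= n ->
  LamAlpha m p alpha l -> (0 < d < Z.to_nat n)%nat -> Nat.iter d sig l <> l.
Proof.
  intros Em Ep Ha Hn [HL HA] Hd E.
  rewrite Em, Ep, !Z.div_mul in HL by lia.
  pose proof HL as [H1 [H2 H3]].
  set (D := Z.of_nat d) in *.
  set (c := l (1 + D)).
  assert (HD : forall i, l (i + D) = l i + c).
  { intros i. pose proof (f_equal (fun f => f i) E) as Ei. simpl in Ei.
    rewrite iter_sig in Ei by auto. cbv beta in Ei. unfold c; fold D in Ei. lia. }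
  set (g := Z.gcd D n).
  destruct (Z.gcd_bezout D n g eq_refl) as [a [b Hab]].
  assert (Hg0 : 0 <= g) by apply Z.gcd_nonneg.
  assert (HgD : g <= D) by (apply Z.divide_pos_le; [lia| apply Z.gcd_divide_l]).
  destruct (Z.gcd_divide_r D n) as [k Hk]. fold g in Hk.
  assert (Hgp : 0 < g) by (destruct (Z.eq_dec g 0); [rewrite e in Hk; lia | lia]).
  assert (Hk2 : 2 <= k) by nia.
  set (c' := c * a + q * b).
  assert (Hg : forall i, l (i + g) = l i + c').
  { intros i. rewrite <- Hab. replace (i + (a * D + b * n)) with ((i + D * a) + n * b) by lia.
    rewrite (per_Z l n q H3), (per_Z l D c HD). unfold c'; lia. }
  assert (Hq : q = c' * k).
  { pose proof (per_Z l g c' Hg k 1). rewrite Z.mul_comm, <- Hk, H3, H1 in H. lia. }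
  apply (HA (alpha * k)).
  - exists g. rewrite Em, Hk. ring.
  - exists c'. rewrite Ep, Hq. ring.
  - nia.
  - replace (m / (alpha * k)) with g by (rewrite Em, Hk; rewrite <- (Z.mul_comm g k) at 1;
      replace (g * k * alpha) with (g * (alpha * k)) by ring; rewrite Z.div_mul; lia).
    replace (p / (alpha * k)) with c' by (rewrite Ep, Hq;
      replace (c' * k * alpha) with (c' * (alpha * k)) by ring; rewrite Z.div_mul; lia).
    repeat split; auto.
Qed.

Theorem mainTheorem5 (m p alpha : Z) (hm : 1 <= m) (hp : 0 <= p)
  (ha : 0 < alpha) (ham : (alpha | m)) (hap : (alpha | p)) :
  exists L : list (Z -> Z),
    NoDup L /\
    (forall l : Z -> Z, In l L <-> LamAlpha m p alpha l) /\
    (m / alpha | Z.of_nat (length L)).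
Proof.
  destruct ham as [n Em]. destruct hap as [q Ep].
  assert (Hn : 1 <= n) by nia. assert (Hq : 0 <= q) by nia.
  assert (Hmn : m / alpha = n) by (rewrite Em, Z.div_mul; lia).
  assert (Hpq : p / alpha = q) by (rewrite Ep, Z.div_mul; lia).
  pose (dec := fun x y : Z -> Z => excluded_middle_informative (x = y)).
  pose (P := fun f => if excluded_middle_informative (LamAlpha m p alpha f) then true else false).
  exists (nodup dec (filter P (map (F n q) (tup (Rq q) (Z.to_nat n))))).
  assert (Hmem : forall l, In l (nodup dec (filter P (map (F n q) (tup (Rq q) (Z.to_nat n))))) <-> LamAlpha m p alpha l).
  { intros l. rewrite nodup_In, filter_In. unfold P. split.
    - intros [_ H]. destruct (excluded_middle_informative _); auto; discriminate.
    - intros H. split.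
      + apply enum; auto. destruct H as [H _]. rewrite Hmn, Hpq in H; auto.
      + destruct (excluded_middle_informative _); tauto. }
  split; [apply NoDup_nodup|]. split; [exact Hmem|].
  assert (Hdiv : Nat.divide (Z.to_nat n) (length (nodup dec (filter P (map (F n q) (tup (Rq q) (Z.to_nat n))))))).
  { apply orbit_count with (s := sig); [exact dec|lia|apply NoDup_nodup|..].
    - intros x Hx. apply Hmem in Hx. apply Hmem. destruct Hx as [HL HA].
      rewrite Hmn, Hpq in *. split.
      + rewrite Hmn, Hpq. apply Lam_sig; auto.
      + intros a' H1 H2 H3 HL'. apply (HA a' H1 H2 H3).
        rewrite <- (iterN n q x (Z.to_nat n)) by (auto; lia).
        replace (Z.to_nat n) with (S (Z.to_nat n - 1)) by lia.
        rewrite Nat.iter_succ_r. apply Lam_iter; auto.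
    - intros x Hx. apply Hmem in Hx. destruct Hx as [HL _]. rewrite Hmn, Hpq in HL.
      apply (iterN n q); auto; lia.
    - intros x d Hx Hd. apply Hmem in Hx. exact (free m p alpha n q x d Em Ep ha Hn Hx Hd). }
  destruct Hdiv as [k Hk]. rewrite Hk, Hmn. exists (Z.of_nat k). rewrite Nat2Z.inj_mul, Z2Nat.id; lia.
Qed.
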